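(* Let $0<q<1$. Then \[ q^{2}(1+q)^{2}(1+q^{2})+q^{6}+(1+q^{2})\sum_{n=1}^{\infty}\frac{(1/2|q^{2})_{n}^{2}}{[n+1]_{q^{2}}!\,[n+2]_{q^{2}}!}\,q^{6n+6}=\frac{(1+q)^{6}(1+q^{2})^{2}}{\pi_{q}(1+q+q^{2})^{2}}\,q^{9/4}. \]
   Context: Let $0<q<1$ and write $q^{x}=e^{x\log q}$. $[z]_{q^2}=\frac{1-q^{2z}}{1-q^2}$; $[0]_{q^2}!=1$, $[n]_{q^2}!=\prod_{k=1}^n[k]_{q^2}$; $(1/2|q^2)_n=\prod_{k=0}^{n-1}[1/2+k]_{q^2}$. With $(z;q)_\infty=\prod_{k\ge0}(1-zq^k)$, $\pi_q=(1-q^2)q^{1/4}\frac{(q^2;q^2)_\infty^2}{(q;q^2)_\infty^2}$. *)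

(* Defs.v *)
From Stdlib Require Import Reals.
Open Scope R_scope.

Definition qpow (q x : R) : R := exp (x * ln q).

Definition qnum (q z : R) : R := (1 - qpow q (2 * z)) / (1 - q ^ 2).

Fixpoint qfact (q : R) (n : nat) : R :=
  match n with
  | O => 1
  | S m => qfact q m * qnum q (INR (S m))
  end.

(* (1/2|q^2)_n = prod_{k=0}^{n-1} [1/2 + k]_{q^2} *)
Fixpoint qhalf (q : R) (n : nat) : R :=
  match n with
  | O => 1
  | S m => qhalf q m * qnum q (1 / 2 + INR m)
  end.

Fixpoint qpoch_partial (z b : R) (N : nat) : R :=
  match N with
  | O => 1
  | S m => qpoch_partial z b m * (1 - z * b ^ m)
  end.

Definition qpoch_inf_is (z b L : R) : Prop :=
  Un_cv (fun N => qpoch_partial z b N) L.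

(* pi_q = (1-q^2) q^{1/4} (q^2;q^2)_inf^2 / (q;q^2)_inf^2, given the values A, B *)
Definition pi_q_of (q A B : R) : R :=
  (1 - q ^ 2) * qpow q (1 / 4) * (A ^ 2) / (B ^ 2).

Definition summand (q : R) (n : nat) : R :=
  (qhalf q n) ^ 2 / (qfact q (n + 1) * qfact q (n + 2)) * q ^ (6 * n + 6).

(* Main.v *)
Require Import Defs.
From Stdlib Require Import Reals Lra Lia.
From Coquelicot Require Import Coquelicot.
Open Scope R_scope.

Lemma pow_le1 b n : 0 <= b <= 1 -> b ^ n <= 1.
Proof. intros h. rewrite <- (pow1 n). apply pow_incr. lra. Qed.

Lemma exp_le x y : x <= y -> exp x <= exp y.
Proof. intros [h|h]. left; apply exp_increasing; auto. subst; lra. Qed.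

Lemma qp_S x b n : qpoch_partial x b (S n) = qpoch_partial x b n * (1 - x * b ^ n).
Proof. reflexivity. Qed.

Lemma qp_shift x b n : qpoch_partial x b (S n) = (1 - x) * qpoch_partial (x * b) b n.
Proof.
  induction n as [|n IH].
  - simpl. ring.
  - rewrite qp_S, IH, qp_S. simpl. ring.
Qed.

Lemma exp_le_1m x m : 0 <= x -> x <= m -> m < 1 -> exp (- (x / (1 - m))) <= 1 - x.
Proof.
  intros h0 h1 h2.
  set (y := x / (1 - m)).
  assert (hy : x <= y * (1 - x)).
  { unfold y. apply (Rmult_le_reg_r (1 - m)). lra.
    replace (x / (1 - m) * (1 - x) * (1 - m)) with (x * (1 - x)) by (field; lra).
    nra. }
  assert (hy0 : 0 <= y) by (unfold y; apply Rdiv_le_0_compat; lra).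
  rewrite exp_Ropp.
  pose proof (exp_ineq1_le y).
  assert (0 < exp y) by apply exp_pos.
  apply (Rmult_le_reg_r (exp y)); auto.
  rewrite Rinv_l by lra. nra.
Qed.

Lemma qp_lower y m b n : 0 <= b < 1 -> 0 <= y -> y <= m -> m < 1 ->
  exp (- (y / (1 - m)) * ((1 - b ^ n) / (1 - b))) <= qpoch_partial y b n.
Proof.
  intros hb hy hym hm.
  induction n as [|n IH].
  - simpl. replace (- (y / (1 - m)) * ((1 - 1) / (1 - b))) with 0 by (field; lra).
    rewrite exp_0. lra.
  - rewrite qp_S.
    assert (hbn : 0 <= b ^ n <= 1).
    { split. apply pow_le; lra. apply pow_le1; lra. }
    replace (- (y / (1 - m)) * ((1 - b ^ S n) / (1 - b))) with
      (- (y / (1 - m)) * ((1 - b ^ n) / (1 - b)) + - (y * b ^ n / (1 - m))).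
    2:{ simpl. field. lra. }
    rewrite exp_plus.
    apply Rmult_le_compat.
    + left; apply exp_pos.
    + left; apply exp_pos.
    + exact IH.
    + apply exp_le_1m; nra.
Qed.

Lemma qp_lower2 y m b n : 0 <= b < 1 -> 0 <= y -> y <= m -> m < 1 ->
  exp (- (m / ((1 - m) * (1 - b)))) <= qpoch_partial y b n.
Proof.
  intros hb hy hym hm.
  eapply Rle_trans; [|apply (qp_lower y m b n); auto].
  apply exp_le.
  assert (hbn : 0 <= b ^ n <= 1).
  { split. apply pow_le; lra. apply pow_le1; lra. }
  assert (0 <= y / (1 - m)) by (apply Rdiv_le_0_compat; lra).
  assert (y / (1 - m) <= m / (1 - m)) by (apply Rmult_le_compat_r; [left; apply Rinv_0_lt_compat; lra | lra]).
  assert (0 <= (1 - b ^ n) / (1 - b) <= 1 / (1 - b)).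
  { split. apply Rdiv_le_0_compat; lra. apply Rmult_le_compat_r; [left; apply Rinv_0_lt_compat; lra | lra]. }
  replace (- (m / ((1 - m) * (1 - b)))) with (- (m / (1 - m) * (1 / (1 - b)))) by (field; lra).
  assert (0 <= m / (1 - m)) by (apply Rdiv_le_0_compat; lra).
  nra.
Qed.

Lemma qp_pos y m b n : 0 <= b < 1 -> 0 <= y -> y <= m -> m < 1 -> 0 < qpoch_partial y b n.
Proof. intros. eapply Rlt_le_trans; [apply exp_pos | apply (qp_lower2 y m); auto]. Qed.

Lemma qp_abs y b n : 0 <= b < 1 ->
  Rabs (qpoch_partial y b n) <= exp (Rabs y * ((1 - b ^ n) / (1 - b))).
Proof.
  intros hb. induction n as [|n IH].
  - simpl. replace (Rabs y * ((1 - 1) / (1 - b))) with 0 by (field; lra).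
    rewrite exp_0, Rabs_R1. lra.
  - rewrite qp_S, Rabs_mult.
    assert (hbn : 0 <= b ^ n <= 1).
    { split. apply pow_le; lra. apply pow_le1; lra. }
    replace (Rabs y * ((1 - b ^ S n) / (1 - b))) with
      (Rabs y * ((1 - b ^ n) / (1 - b)) + Rabs y * b ^ n).
    2:{ simpl. field. lra. }
    rewrite exp_plus.
    apply Rmult_le_compat; try apply Rabs_pos; auto.
    eapply Rle_trans; [|apply exp_ineq1_le].
    eapply Rle_trans; [apply Rabs_triang|]. rewrite Rabs_R1, Rabs_Ropp, Rabs_mult.
    rewrite (Rabs_right (b ^ n)) by lra. lra.
Qed.

Lemma qp_abs2 y b n : 0 <= b < 1 ->
  Rabs (qpoch_partial y b n) <= exp (Rabs y / (1 - b)).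
Proof.
  intros hb. eapply Rle_trans; [apply qp_abs; auto|]. apply exp_le.
  assert (hbn : 0 <= b ^ n <= 1).
  { split. apply pow_le; lra. apply pow_le1; lra. }
  pose proof (Rabs_pos y).
  unfold Rdiv. rewrite <- Rmult_assoc.
  apply Rmult_le_compat_r. left; apply Rinv_0_lt_compat; lra. nra.
Qed.

Lemma qp_decr y b n : 0 <= b < 1 -> 0 <= y < 1 ->
  qpoch_partial y b (S n) <= qpoch_partial y b n.
Proof.
  intros hb hy. rewrite qp_S.
  assert (hbn : 0 <= b ^ n <= 1).
  { split. apply pow_le; lra. apply pow_le1; lra. }
  pose proof (qp_pos y y b n hb ltac:(lra) ltac:(lra) ltac:(lra)).
  assert (0 <= y * b ^ n) by nra. nra.
Qed.

Definition U (q c : R) (n : nat) : R :=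
  (qpoch_partial (/ q) (q ^ 2) n) ^ 2 /
    (qpoch_partial (q ^ 2) (q ^ 2) n * qpoch_partial c (q ^ 2) n) * (c * q ^ 2) ^ n.

Definition Lb (q : R) : R := exp (- (q ^ 2 / ((1 - q ^ 2) * (1 - q ^ 2)))).
Definition MU (q : R) : R := exp (/ q / (1 - q ^ 2)) ^ 2 / (Lb q * Lb q).

Lemma p_bounds q : 0 < q < 1 -> 0 < q ^ 2 < 1.
Proof. intros. split; nra. Qed.

Lemma Pp_lb q c n : 0 < q < 1 -> 0 <= c <= q ^ 2 -> Lb q <= qpoch_partial c (q ^ 2) n.
Proof.
  intros hq hc. pose proof (p_bounds q hq).
  apply (qp_lower2 c (q ^ 2) (q ^ 2) n); lra.
Qed.

Lemma Lb_pos q : 0 < Lb q.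
Proof. apply exp_pos. Qed.

Lemma U_nonneg q c n : 0 < q < 1 -> 0 <= c <= q ^ 2 -> 0 <= U q c n.
Proof.
  intros hq hc. pose proof (p_bounds q hq).
  pose proof (Pp_lb q c n hq hc). pose proof (Pp_lb q (q^2) n hq ltac:(lra)).
  pose proof (Lb_pos q).
  unfold U. apply Rmult_le_pos.
  - apply Rdiv_le_0_compat. apply pow2_ge_0. apply Rmult_lt_0_compat; lra.
  - apply pow_le. nra.
Qed.

Lemma U_bound q c n : 0 < q < 1 -> 0 <= c <= q ^ 2 -> U q c n <= MU q * (c * q ^ 2) ^ n.
Proof.
  intros hq hc. pose proof (p_bounds q hq).
  pose proof (Pp_lb q c n hq hc). pose proof (Pp_lb q (q^2) n hq ltac:(lra)).
  pose proof (Lb_pos q).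
  assert (hA := qp_abs2 (/ q) (q ^ 2) n ltac:(lra)).
  set (E := exp (Rabs (/ q) / (1 - q ^ 2))) in hA.
  assert (hE : E = exp (/ q / (1 - q ^ 2))).
  { unfold E. rewrite Rabs_right; auto. left; apply Rinv_0_lt_compat; lra. }
  set (Pa := qpoch_partial (/ q) (q ^ 2) n) in *.
  set (Pp := qpoch_partial (q ^ 2) (q ^ 2) n) in *.
  set (Pc := qpoch_partial c (q ^ 2) n) in *.
  unfold U, MU. fold Pa Pp Pc. rewrite <- hE.
  assert (h2 : Pa ^ 2 <= E ^ 2).
  { rewrite <- (pow2_abs Pa). apply pow_incr. split; [apply Rabs_pos|auto]. }
  assert (hz : 0 <= (c * q ^ 2) ^ n) by (apply pow_le; nra).
  apply Rmult_le_compat_r; auto.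
  unfold Rdiv. apply Rmult_le_compat; auto.
  - apply pow2_ge_0.
  - left. apply Rinv_0_lt_compat. nra.
  - apply Rinv_le_contravar. nra. apply Rmult_le_compat; lra.
Qed.

Lemma ex_U q c : 0 < q < 1 -> 0 <= c <= q ^ 2 -> ex_series (U q c).
Proof.
  intros hq hc. pose proof (p_bounds q hq).
  apply (@ex_series_le R_AbsRing R_CompleteNormedModule _ (fun n => MU q * (c * q ^ 2) ^ n)).
  - intros n. change norm with Rabs. simpl. rewrite Rabs_right.
    apply U_bound; auto. apply Rle_ge, U_nonneg; auto.
  - assert (hg : ex_series (fun n => (c * q ^ 2) ^ n)).
    { apply ex_series_geom. rewrite Rabs_right by nra. nra. }
    exact (@ex_series_scal_l R_AbsRing R_NormedModule (MU q) _ hg).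
Qed.

Lemma pn_bounds q n : 0 < q < 1 -> 0 < (q ^ 2) ^ n <= 1.
Proof. intros hq. pose proof (p_bounds q hq). split. apply pow_lt; lra. apply pow_le1; lra. Qed.

Lemma U_S q c n : 0 < q < 1 -> 0 <= c <= q ^ 2 ->
  U q c (S n) = U q c n * (1 - / q * (q ^ 2) ^ n) ^ 2 * (c * q ^ 2) /
     ((1 - q ^ 2 * (q ^ 2) ^ n) * (1 - c * (q ^ 2) ^ n)).
Proof.
  intros hq hc. pose proof (p_bounds q hq). pose proof (pn_bounds q n hq).
  pose proof (Pp_lb q c n hq hc). pose proof (Pp_lb q (q^2) n hq ltac:(lra)).
  pose proof (Lb_pos q).
  unfold U. rewrite !qp_S. rewrite <- (tech_pow_Rmult (c * q ^ 2) n).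
  assert (1 - q ^ 2 * (q ^ 2) ^ n <> 0) by nra.
  assert (1 - c * (q ^ 2) ^ n <> 0) by nra.
  field. repeat split; try lra.
Qed.

Lemma U_cp q c n : 0 < q < 1 -> 0 <= c <= q ^ 2 ->
  U q (c * q ^ 2) n = U q c n * (1 - c) * (q ^ 2) ^ n / (1 - c * (q ^ 2) ^ n).
Proof.
  intros hq hc. pose proof (p_bounds q hq). pose proof (pn_bounds q n hq).
  pose proof (Pp_lb q c n hq hc). pose proof (Pp_lb q (q^2) n hq ltac:(lra)).
  pose proof (Lb_pos q).
  assert (h1 := qp_shift c (q ^ 2) n). rewrite qp_S in h1.
  assert (heq : qpoch_partial (c * q ^ 2) (q ^ 2) n =
     qpoch_partial c (q ^ 2) n * (1 - c * (q ^ 2) ^ n) / (1 - c)).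
  { rewrite h1. field. lra. }
  unfold U. rewrite heq. rewrite (Rpow_mult_distr (c * q ^ 2) (q ^ 2) n).
  assert (1 - c * (q ^ 2) ^ n <> 0) by nra.
  field. repeat split; try lra.
Qed.

Definition K (q c : R) : R := (1 - c * q) ^ 2 / ((1 - c) * (1 - c * q ^ 2)).

Lemma contig q c : 0 < q < 1 -> 0 <= c <= q ^ 2 ->
  Series (U q c) = K q c * Series (U q (c * q ^ 2)).
Proof.
  intros hq hc. pose proof (p_bounds q hq).
  assert (hc2 : 0 <= c * q ^ 2 <= q ^ 2) by nra.
  set (D := fun n => U q c n * (1 - (q ^ 2) ^ n)).
  assert (hD : ex_series D).
  { apply (@ex_series_le R_AbsRing R_CompleteNormedModule _ (U q c)); [|apply ex_U; auto].
    intros n. change norm with Rabs. simpl. unfold D.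
    pose proof (pn_bounds q n hq). pose proof (U_nonneg q c n hq hc).
    rewrite Rabs_right by nra. nra. }
  assert (key : forall n, U q c n - K q c * U q (c * q ^ 2) n = (D n - D (S n)) / (1 - c * q ^ 2)).
  { intros n. unfold D. rewrite (U_S q c n hq hc), (U_cp q c n hq hc).
    pose proof (pn_bounds q n hq).
    assert (1 - q ^ 2 * (q ^ 2) ^ n <> 0) by nra.
    assert (1 - c * (q ^ 2) ^ n <> 0) by nra.
    unfold K. rewrite <- (tech_pow_Rmult (q ^ 2) n).
    field. repeat split; try nra. }
  assert (e1 : Series (fun n => U q c n - K q c * U q (c * q ^ 2) n) =
     Series (U q c) - K q c * Series (U q (c * q ^ 2))).
  { rewrite Series_minus. rewrite Series_scal_l. reflexivity.
    apply ex_U; auto.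
    exact (@ex_series_scal_l R_AbsRing R_NormedModule (K q c) _ (ex_U q (c * q ^ 2) hq hc2)). }
  rewrite (Series_ext _ _ key) in e1.
  assert (hDS : ex_series (fun n => D (S n))) by exact (proj1 (ex_series_incr_1 D) hD).
  unfold Rdiv in e1. rewrite Series_scal_r, Series_minus in e1 by auto.
  rewrite (Series_incr_1 D hD) in e1.
  assert (hD0 : D 0%nat = 0) by (unfold D; simpl; ring).
  rewrite hD0 in e1.
  set (SS := Series (fun k : nat => D (S k))) in e1.
  replace ((0 + SS - SS) * / (1 - c * q ^ 2)) with 0 in e1 by ring.
  lra.
Qed.

Lemma U0 q c : 0 < q -> U q c 0 = 1.
Proof. intros. unfold U. simpl. field. Qed.

Lemma G_bounds q c : 0 < q < 1 -> 0 <= c <= q ^ 2 ->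
  1 <= Series (U q c) <= 1 + MU q * (c * q ^ 2) / (1 - q ^ 2).
Proof.
  intros hq hc. pose proof (p_bounds q hq).
  assert (hz : 0 <= c * q ^ 2 <= q ^ 2) by nra.
  assert (hex := ex_U q c hq hc).
  rewrite (Series_incr_1 _ hex), U0 by lra.
  assert (hexS : ex_series (fun n => U q c (S n))) by exact (proj1 (ex_series_incr_1 _) hex).
  assert (lo : 0 <= Series (fun n => U q c (S n))).
  { replace 0 with (Series (fun n => 0 * U q c (S n))).
    apply Series_le; auto. intros n. pose proof (U_nonneg q c (S n) hq hc). lra.
    rewrite Series_scal_l. ring. }
  assert (hg : is_series (fun n => (c * q ^ 2) ^ n) (/ (1 - c * q ^ 2))).
  { apply is_series_geom. rewrite Rabs_right by nra. nra. }
  assert (hg' : ex_series (fun n => MU q * (c * q ^ 2) * (c * q ^ 2) ^ n)).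
  { exact (@ex_series_scal_l R_AbsRing R_NormedModule (MU q * (c * q ^ 2)) _ (ex_intro _ _ hg)). }
  assert (hi : Series (fun n => U q c (S n)) <= Series (fun n => MU q * (c * q ^ 2) * (c * q ^ 2) ^ n)).
  { apply Series_le; auto. intros n. split. apply U_nonneg; auto.
    rewrite Rmult_assoc, tech_pow_Rmult. apply U_bound; auto. }
  rewrite (Series_scal_l (MU q * (c * q ^ 2)) (fun n => (c * q ^ 2) ^ n)), (is_series_unique _ _ hg) in hi.
  assert (hMU : 0 < MU q).
  { unfold MU. pose proof (Lb_pos q). apply Rdiv_lt_0_compat. apply pow_lt, exp_pos. nra. }
  assert (MU q * (c * q ^ 2) * / (1 - c * q ^ 2) <= MU q * (c * q ^ 2) / (1 - q ^ 2)).
  { unfold Rdiv. apply Rmult_le_compat_l. nra. apply Rinv_le_contravar; nra. }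
  lra.
Qed.

Lemma chain q N : 0 < q < 1 ->
  Series (U q (q ^ 4)) * qpoch_partial (q ^ 4) (q ^ 2) N * qpoch_partial (q ^ 6) (q ^ 2) N
  = qpoch_partial (q ^ 5) (q ^ 2) N ^ 2 * Series (U q (q ^ 4 * (q ^ 2) ^ N)).
Proof.
  intros hq. pose proof (p_bounds q hq).
  induction N as [|N IH].
  - rewrite pow_O, (Rmult_1_r (q ^ 4)). unfold qpoch_partial. ring.
  - rewrite !qp_S.
    pose proof (pn_bounds q N hq).
    set (c := q ^ 4 * (q ^ 2) ^ N) in *.
    assert (hc : 0 <= c <= q ^ 2).
    { unfold c. assert (0 <= q ^ 2 * (q ^ 2) ^ N <= 1) by (split; nra).
      replace (q ^ 4 * (q ^ 2) ^ N) with (q ^ 2 * (q ^ 2 * (q ^ 2) ^ N)) by ring. split; nra. }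
    assert (e : q ^ 4 * (q ^ 2) ^ S N = c * q ^ 2).
    { unfold c. rewrite <- (tech_pow_Rmult (q ^ 2) N). ring. }
    rewrite e.
    replace (q ^ 6 * (q ^ 2) ^ N) with (c * q ^ 2) by (unfold c; ring).
    replace (q ^ 5 * (q ^ 2) ^ N) with (c * q) by (unfold c; ring).
    fold c.
    assert (e2 : Series (U q c) = K q c * Series (U q (c * q ^ 2))) by (apply contig; auto).
    unfold K in e2.
    assert (1 - c <> 0) by nra. assert (1 - c * q ^ 2 <> 0) by nra.
    transitivity (Series (U q (q ^ 4)) * qpoch_partial (q ^ 4) (q ^ 2) N * qpoch_partial (q ^ 6) (q ^ 2) N * ((1 - c) * (1 - c * q ^ 2))).
    ring.
    rewrite IH, e2. field. split; auto.
Qed.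

Lemma qpow_INR q n : 0 < q -> qpow q (INR n) = q ^ n.
Proof. intros. unfold qpow. change (Rpower q (INR n) = q ^ n). apply Rpower_pow; auto. Qed.

Lemma qnum_nat q k : 0 < q -> qnum q (INR k) = (1 - (q ^ 2) ^ k) / (1 - q ^ 2).
Proof.
  intros hq. unfold qnum.
  replace (2 * INR k) with (INR (2 * k)) by (rewrite mult_INR; simpl; ring).
  rewrite qpow_INR, pow_mult by auto. reflexivity.
Qed.

Lemma qnum_half q k : 0 < q -> qnum q (1 / 2 + INR k) = (1 - q * (q ^ 2) ^ k) / (1 - q ^ 2).
Proof.
  intros hq. unfold qnum.
  replace (2 * (1 / 2 + INR k)) with (INR (S (2 * k))) by (rewrite S_INR, mult_INR; simpl; field).
  rewrite qpow_INR by auto. rewrite <- (tech_pow_Rmult q (2 * k)), pow_mult. reflexivity.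
Qed.

Lemma qfact_closed q n : 0 < q < 1 ->
  qfact q n = qpoch_partial (q ^ 2) (q ^ 2) n / (1 - q ^ 2) ^ n.
Proof.
  intros hq. pose proof (p_bounds q hq).
  induction n as [|n IH].
  - simpl. field.
  - change (qfact q (S n)) with (qfact q n * qnum q (INR (S n))).
    rewrite IH, qnum_nat, qp_S by lra.
    rewrite <- (tech_pow_Rmult (q ^ 2) n), <- (tech_pow_Rmult (1 - q ^ 2) n).
    assert ((1 - q ^ 2) ^ n <> 0) by (apply pow_nonzero; lra).
    field. split; lra.
Qed.

Lemma qhalf_closed q n : 0 < q < 1 ->
  qhalf q n = qpoch_partial q (q ^ 2) n / (1 - q ^ 2) ^ n.
Proof.
  intros hq. pose proof (p_bounds q hq).
  induction n as [|n IH].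
  - simpl. field.
  - change (qhalf q (S n)) with (qhalf q n * qnum q (1 / 2 + INR n)).
    rewrite IH, qnum_half, qp_S by lra.
    rewrite <- (tech_pow_Rmult (1 - q ^ 2) n).
    assert ((1 - q ^ 2) ^ n <> 0) by (apply pow_nonzero; lra).
    field. split; lra.
Qed.

Lemma summand_eq q n : 0 < q < 1 ->
  summand q n = q ^ 2 * (1 + q) ^ 2 * U q (q ^ 4) (S n).
Proof.
  intros hq. pose proof (p_bounds q hq).
  unfold summand. rewrite qhalf_closed, !qfact_closed by auto.
  replace (n + 1)%nat with (S n) by lia.
  replace (n + 2)%nat with (S (S n)) by lia.
  unfold U.
  rewrite (qp_shift (/ q) (q ^ 2) n).
  replace (/ q * q ^ 2) with q by (field; lra).
  assert (h4 : qpoch_partial (q ^ 4) (q ^ 2) (S n) =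
    qpoch_partial (q ^ 2) (q ^ 2) (S (S n)) / (1 - q ^ 2)).
  { rewrite (qp_shift (q ^ 2) (q ^ 2) (S n)). replace (q ^ 2 * q ^ 2) with (q ^ 4) by ring.
    field. lra. }
  rewrite h4.
  pose proof (qp_pos (q ^ 2) (q ^ 2) (q ^ 2) (S n) ltac:(lra) ltac:(lra) ltac:(lra) ltac:(lra)).
  pose proof (qp_pos (q ^ 2) (q ^ 2) (q ^ 2) (S (S n)) ltac:(lra) ltac:(lra) ltac:(lra) ltac:(lra)).
  replace (6 * n + 6)%nat with (S n * 6)%nat by lia.
  rewrite (Rmult_comm (S n) 6) || idtac.
  rewrite <- (tech_pow_Rmult (1 - q ^ 2) (S n)), <- (tech_pow_Rmult (1 - q ^ 2) n).
  replace (q ^ (S n * 6)) with ((q ^ 4 * q ^ 2) ^ S n).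
  2:{ rewrite Nat.mul_comm, pow_mult. f_equal. ring. }
  assert ((1 - q ^ 2) ^ n <> 0) by (apply pow_nonzero; lra).
  field. repeat split; lra.
Qed.

Lemma lim_P y q : 0 < q < 1 -> 0 <= y < 1 ->
  exists L : R, is_lim_seq (fun N => qpoch_partial y (q ^ 2) N) L /\ 0 < L.
Proof.
  intros hq hy. pose proof (p_bounds q hq).
  set (e := exp (- (y / ((1 - y) * (1 - q ^ 2))))).
  assert (hlow : forall n, e <= qpoch_partial y (q ^ 2) n).
  { intros n. apply (qp_lower2 y y (q ^ 2) n); lra. }
  destruct (ex_finite_lim_seq_decr (fun N => qpoch_partial y (q ^ 2) N) e) as [L hL].
  - intros n. apply qp_decr; lra.
  - exact hlow.
  - exists L. split; auto.
    assert (h := is_lim_seq_le (fun _ => e) _ e L hlow (is_lim_seq_const e) hL).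
    simpl in h. eapply Rlt_le_trans; [apply exp_pos|exact h].
Qed.

Lemma G_lim q : 0 < q < 1 ->
  is_lim_seq (fun N => Series (U q (q ^ 4 * (q ^ 2) ^ N))) 1.
Proof.
  intros hq. pose proof (p_bounds q hq).
  set (C := MU q * q ^ 6 / (1 - q ^ 2)).
  apply (is_lim_seq_le_le (fun _ => 1) _ (fun N => 1 + C * (q ^ 2) ^ N)).
  - intros N. pose proof (pn_bounds q N hq).
    assert (hc : 0 <= q ^ 4 * (q ^ 2) ^ N <= q ^ 2).
    { assert (0 <= q ^ 2 * (q ^ 2) ^ N <= 1) by (split; nra).
      replace (q ^ 4 * (q ^ 2) ^ N) with (q ^ 2 * (q ^ 2 * (q ^ 2) ^ N)) by ring. split; nra. }
    pose proof (G_bounds q _ hq hc).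
    replace (C * (q ^ 2) ^ N) with (MU q * (q ^ 4 * (q ^ 2) ^ N * q ^ 2) / (1 - q ^ 2)).
    lra. unfold C. field. lra.
  - apply is_lim_seq_const.
  - replace (Finite 1) with (Finite (1 + C * 0)) by (f_equal; ring).
    apply (is_lim_seq_plus' (fun _ => 1)). apply is_lim_seq_const.
    apply (is_lim_seq_scal_l _ C (Finite 0)). apply is_lim_seq_geom.
    rewrite Rabs_right; lra.
Qed.

Lemma G0_val (q A B : R) : 0 < q < 1 ->
  is_lim_seq (fun N => qpoch_partial (q ^ 2) (q ^ 2) N) A ->
  is_lim_seq (fun N => qpoch_partial q (q ^ 2) N) B ->
  Series (U q (q ^ 4)) * (1 - q) ^ 2 * (1 - q ^ 3) ^ 2 * (A * A)
  = (1 - q ^ 2) ^ 2 * (1 - q ^ 4) * (B * B * 1).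
Proof.
  intros hq hA hB. pose proof (p_bounds q hq).
  set (G0 := Series (U q (q ^ 4))).
  set (PA := fun N => qpoch_partial (q ^ 2) (q ^ 2) N) in *.
  set (PB := fun N => qpoch_partial q (q ^ 2) N) in *.
  assert (eq : forall N, G0 * (1 - q) ^ 2 * (1 - q ^ 3) ^ 2 * (PA (S N) * PA (S (S N)))
     = (1 - q ^ 2) ^ 2 * (1 - q ^ 4) * (PB (S (S N)) * PB (S (S N)) * Series (U q (q ^ 4 * (q ^ 2) ^ N)))).
  { intros N. pose proof (chain q N hq) as hc. fold G0 in hc.
    unfold PA, PB.
    rewrite (qp_shift (q ^ 2) (q ^ 2) (S N)), (qp_shift (q ^ 2 * q ^ 2) (q ^ 2) N),
      (qp_shift (q ^ 2) (q ^ 2) N), (qp_shift q (q ^ 2) (S N)), (qp_shift (q * q ^ 2) (q ^ 2) N).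
    replace (q ^ 2 * q ^ 2) with (q ^ 4) by ring.
    replace (q ^ 4 * q ^ 2) with (q ^ 6) by ring.
    replace (q * q ^ 2 * q ^ 2) with (q ^ 5) by ring.
    replace (q * q ^ 2) with (q ^ 3) by ring.
    transitivity ((1 - q) ^ 2 * (1 - q ^ 3) ^ 2 * (1 - q ^ 2) ^ 2 * (1 - q ^ 4) *
      (G0 * qpoch_partial (q ^ 4) (q ^ 2) N * qpoch_partial (q ^ 6) (q ^ 2) N)).
    ring. rewrite hc. ring. }
  assert (l1 : is_lim_seq (fun N => G0 * (1 - q) ^ 2 * (1 - q ^ 3) ^ 2 * (PA (S N) * PA (S (S N))))
     (G0 * (1 - q) ^ 2 * (1 - q ^ 3) ^ 2 * (A * A))).
  { apply (is_lim_seq_scal_l _ _ (Finite (A * A))).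
    apply is_lim_seq_mult'.
    - exact (proj1 (is_lim_seq_incr_1 PA A) hA).
    - apply (proj1 (is_lim_seq_incr_1 (fun n => PA (S n)) A)).
      exact (proj1 (is_lim_seq_incr_1 PA A) hA). }
  assert (hB2 : is_lim_seq (fun N => PB (S (S N))) B).
  { apply (proj1 (is_lim_seq_incr_1 (fun n => PB (S n)) B)).
    exact (proj1 (is_lim_seq_incr_1 PB B) hB). }
  assert (l2 : is_lim_seq (fun N => (1 - q ^ 2) ^ 2 * (1 - q ^ 4) * (PB (S (S N)) * PB (S (S N)) * Series (U q (q ^ 4 * (q ^ 2) ^ N))))
     ((1 - q ^ 2) ^ 2 * (1 - q ^ 4) * (B * B * 1))).
  { apply (is_lim_seq_scal_l _ _ (Finite (B * B * 1))).
    apply is_lim_seq_mult'. apply is_lim_seq_mult'; auto. apply G_lim; auto. }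
  apply (is_lim_seq_ext _ _ _ eq) in l1.
  apply is_lim_seq_unique in l1. apply is_lim_seq_unique in l2.
  rewrite l1 in l2. injection l2. auto.
Qed.

Theorem mainTheorem9 (q : R) (hq0 : 0 < q) (hq1 : q < 1) :
  exists A B Ssum : R,
    qpoch_inf_is (q ^ 2) (q ^ 2) A /\
    qpoch_inf_is q (q ^ 2) B /\
    infinite_sum (fun n => summand q (S n)) Ssum /\
    q ^ 2 * (1 + q) ^ 2 * (1 + q ^ 2) + q ^ 6 + (1 + q ^ 2) * Ssum =
      (1 + q) ^ 6 * (1 + q ^ 2) ^ 2 / (pi_q_of q A B * (1 + q + q ^ 2) ^ 2)
      * qpow q (9 / 4).
Proof.
  assert (hq : 0 < q < 1) by lra. pose proof (p_bounds q hq).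
  destruct (lim_P (q ^ 2) q hq ltac:(lra)) as [A [hA hA0]].
  destruct (lim_P q q hq ltac:(lra)) as [B [hB hB0]].
  assert (hc4 : 0 <= q ^ 4 <= q ^ 2).
  { replace (q ^ 4) with (q ^ 2 * q ^ 2) by ring. split; nra. }
  assert (hexU := ex_U q (q ^ 4) hq hc4).
  assert (hexU1 : ex_series (fun n => U q (q ^ 4) (S n))) by exact (proj1 (ex_series_incr_1 _) hexU).
  assert (hexU2 : ex_series (fun n => U q (q ^ 4) (S (S n)))) by exact (proj1 (ex_series_incr_1 _) hexU1).
  set (k := q ^ 2 * (1 + q) ^ 2).
  assert (hext : forall n, k * U q (q ^ 4) (S (S n)) = summand q (S n)).
  { intros n. unfold k. rewrite summand_eq by auto. reflexivity. }
  assert (hexS : ex_series (fun n => summand q (S n))).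
  { eapply ex_series_ext. exact hext.
    exact (@ex_series_scal_l R_AbsRing R_NormedModule k _ hexU2). }
  exists A, B, (Series (fun n => summand q (S n))).
  split; [|split; [|split]].
  - unfold qpoch_inf_is. apply is_lim_seq_Reals. exact hA.
  - unfold qpoch_inf_is. apply is_lim_seq_Reals. exact hB.
  - apply is_series_Reals. apply Series_correct. exact hexS.
  - assert (hS : Series (fun n => summand q (S n)) = k * Series (fun n => U q (q ^ 4) (S (S n)))).
    { rewrite <- Series_scal_l. apply Series_ext. intros n. symmetry. apply hext. }
    assert (hG := G0_val q A B hq hA hB).
    rewrite (Series_incr_1 _ hexU), (Series_incr_1 _ hexU1), U0 in hG by lra.
    assert (h0 : summand q 0 = k * U q (q ^ 4) 1).
    { unfold k. apply summand_eq; auto. }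
    assert (h0' : (1 + q ^ 2) * summand q 0 = q ^ 6).
    { unfold summand. rewrite qhalf_closed, !qfact_closed by auto. simpl. field.
      repeat split; nra. }
    assert (hqp : qpow q (9 / 4) = q ^ 2 * qpow q (1 / 4)).
    { rewrite <- (qpow_INR q 2) by lra. unfold qpow. rewrite <- exp_plus. f_equal.
      simpl. field. }
    assert (hQ : 0 < qpow q (1 / 4)) by apply exp_pos.
    rewrite hqp, hS. unfold pi_q_of.
    set (T := Series (fun n => U q (q ^ 4) (S (S n)))) in *.
    set (u1 := U q (q ^ 4) 1) in *.
    set (Q := qpow q (1 / 4)) in *.
    assert (hq6 : q ^ 6 = (1 + q ^ 2) * k * u1) by (rewrite <- h0'; rewrite h0; ring).
    rewrite hq6.
    assert (hT : (1 + u1 + T) = (1 - q ^ 2) ^ 2 * (1 - q ^ 4) * (B * B) / ((1 - q) ^ 2 * (1 - q ^ 3) ^ 2 * (A * A))).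
    { apply (Rmult_eq_reg_r ((1 - q) ^ 2 * (1 - q ^ 3) ^ 2 * (A * A))).
      2:{ assert (0 < 1 - q ^ 3) by nra. apply Rgt_not_eq. apply Rmult_lt_0_compat. apply Rmult_lt_0_compat; apply pow_lt; lra. nra. }
      transitivity ((1 - q ^ 2) ^ 2 * (1 - q ^ 4) * (B * B * 1)).
      rewrite <- hG. ring. field. split. nra. split. nra. lra. }
    transitivity ((1 + q ^ 2) * k * (1 + u1 + T)). unfold k; ring.
    rewrite hT. unfold k.
    assert (0 < 1 - q ^ 3) by nra. assert (0 < 1 + q + q ^ 2) by nra.
    field. repeat split; nra.
Qed.
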